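(* For $t\in\mathbb C$ let $f_t(z)=\sqrt{z^2-z+t}$ (principal branch, holomorphic near $z=0$ when $t\notin(-\infty,0]$) and let $f_t(z)=\sum_{n\ge0}\hat f_n(t)z^n$ be its Taylor expansion at $0$. Fix $0<r<1/4$ and $M>0$. Then there exists $N=N(r,M)$ such that $$\max_{1\le n\le N}|\hat f_n(t)|>M$$ for all $t\in\mathbb C$ with $|t-1/4|=r$.
   Context: $\sqrt{\cdot}$ denotes the principal branch: $\sqrt z=|z|^{1/2}e^{i(\arg z)/2}$ with $\arg z\in(-\pi,\pi]$. Note that for $|t-1/4|=r<1/4$ one has $\operatorname{Re}t>0$, so $f_t$ is holomorphic near $0$. *)

(* Defs.v *)
From Stdlib Require Import Reals Lra.
Open Scope R_scope.

Definition CC : Type := (R * R)%type.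

Definition Cre (z : CC) : R := fst z.
Definition Cim (z : CC) : R := snd z.
Definition RtoC (x : R) : CC := (x, 0).
Definition C0 : CC := (0, 0).
Definition C1 : CC := (1, 0).
Definition Cadd (z w : CC) : CC := (Cre z + Cre w, Cim z + Cim w).
Definition Copp (z : CC) : CC := (- Cre z, - Cim z).
Definition Csub (z w : CC) : CC := Cadd z (Copp w).
Definition Cmul (z w : CC) : CC :=
  (Cre z * Cre w - Cim z * Cim w, Cre z * Cim w + Cim z * Cre w).
Fixpoint Cpow (z : CC) (n : nat) : CC :=
  match n with O => C1 | S m => Cmul z (Cpow z m) end.
Definition Cmod (z : CC) : R := sqrt (Cre z ^ 2 + Cim z ^ 2).

(* Principal argument, with values in (-PI, PI] (for z <> 0). *)
Definition Carg (z : CC) : R :=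
  if Rle_dec 0 (Cim z) then acos (Cre z / Cmod z) else - acos (Cre z / Cmod z).

Definition Cexpi (theta : R) : CC := (cos theta, sin theta).

Definition Csqrt (z : CC) : CC := Cmul (RtoC (sqrt (Cmod z))) (Cexpi (Carg z / 2)).

Fixpoint Cpsum (a : nat -> CC) (z : CC) (N : nat) : CC :=
  match N with
  | O => Cmul (a O) (Cpow z O)
  | S m => Cadd (Cpsum a z m) (Cmul (a (S m)) (Cpow z (S m)))
  end.

Definition Ccv (u : nat -> CC) (l : CC) : Prop :=
  forall eps : R, eps > 0 -> exists N : nat, forall n : nat, (n >= N)%nat ->
    Cmod (Csub (u n) l) < eps.

(* a is the sequence of Taylor coefficients of f at 0: the power series
   sum_n a_n z^n converges to f z on some disc |z| < rho, rho > 0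
   (power series representations at 0 are unique, so a_n = f^{(n)}(0)/n!). *)
Definition is_taylor_at0 (f : CC -> CC) (a : nat -> CC) : Prop :=
  exists rho : R, rho > 0 /\
    forall z : CC, Cmod z < rho -> Ccv (Cpsum a z) (f z).

Definition f_t (t : CC) (z : CC) : CC :=
  Csqrt (Cadd (Csub (Cpow z 2) z) t).

(* Main.v *)
Require Import Defs.
From Stdlib Require Import Reals Lra Lia Psatz Classical.
From Coquelicot Require Complex.
Open Scope R_scope.


Lemma CC_ring : ring_theory Defs.C0 Defs.C1 Cadd Cmul Csub Copp (@eq CC).
Proof.
  constructor; intros; repeat match goal with z : CC |- _ => destruct z end;
  unfold Csub;
  unfold Defs.C0, Defs.C1, Cadd, Cmul, Csub, Copp, Cre, Cim; simpl; f_equal; ring.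
Qed.
Add Ring CCr : CC_ring.

Lemma CmodM z w : Cmod (Cmul z w) = Cmod z * Cmod w.
Proof. exact (Complex.Cmod_mult z w). Qed.
Lemma CmodD z w : Cmod (Cadd z w) <= Cmod z + Cmod w.
Proof. exact (Complex.Cmod_triangle z w). Qed.
Lemma CmodN z : Cmod (Copp z) = Cmod z.
Proof. exact (Complex.Cmod_opp z). Qed.
Lemma Cmod_ge0 z : 0 <= Cmod z.
Proof. exact (Complex.Cmod_ge_0 z). Qed.
Lemma Cmod_eq0 z : Cmod z = 0 -> z = Defs.C0.
Proof. intro H. exact (Complex.Cmod_eq_0 z H). Qed.
Lemma CmodR x : Cmod (RtoC x) = Rabs x.
Proof. exact (Complex.Cmod_R x). Qed.
Lemma CmodB z w : Cmod (Csub z w) <= Cmod z + Cmod w.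
Proof. unfold Csub. rewrite <- (CmodN w). apply CmodD. Qed.
Lemma CmodBsym z w : Cmod (Csub z w) = Cmod (Csub w z).
Proof. replace (Csub z w) with (Copp (Csub w z)) by ring. apply CmodN. Qed.
Lemma CmodBtri z w u : Cmod (Csub z w) <= Cmod (Csub z u) + Cmod (Csub u w).
Proof. replace (Csub z w) with (Cadd (Csub z u) (Csub u w)) by ring. apply CmodD. Qed.
Lemma CmodB_ge z w : Cmod z - Cmod w <= Cmod (Csub z w).
Proof. pose proof (CmodD (Csub z w) w). replace (Cadd (Csub z w) w) with z in H by ring. lra. Qed.
Lemma Cpow_S z n : Cpow z (S n) = Cmul z (Cpow z n).
Proof. reflexivity. Qed.
Lemma Cpow_add z n m : Cpow z (n + m) = Cmul (Cpow z n) (Cpow z m).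
Proof. induction n; simpl. ring. rewrite IHn. ring. Qed.
Lemma Cmod_pow z n : Cmod (Cpow z n) = Cmod z ^ n.
Proof. induction n; simpl. unfold Cmod, Defs.C1, Cre, Cim; simpl. replace (1*(1*1)+0*(0*1)) with 1 by ring. apply sqrt_1.
rewrite CmodM, IHn. ring. Qed.
Lemma Cpow_real x n : Cpow (RtoC x) n = RtoC (x ^ n).
Proof. induction n; simpl. reflexivity. rewrite IHn. unfold Cmul, RtoC, Cre, Cim; simpl. f_equal; ring. Qed.

Fixpoint csum (f : nat -> CC) (n : nat) : CC :=
  match n with O => f O | S m => Cadd (csum f m) (f (S m)) end.

Lemma Cpsum_csum a z N : Cpsum a z N = csum (fun k => Cmul (a k) (Cpow z k)) N.
Proof. induction N; simpl; congruence. Qed.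

Lemma csum_ext f g n : (forall k, (k <= n)%nat -> f k = g k) -> csum f n = csum g n.
Proof. induction n; intro H; simpl. apply H; lia. rewrite IHn, H; auto. Qed.

Lemma csum_add f g n : csum (fun k => Cadd (f k) (g k)) n = Cadd (csum f n) (csum g n).
Proof. induction n; simpl. reflexivity. rewrite IHn. ring. Qed.
Lemma csum_sub f g n : csum (fun k => Csub (f k) (g k)) n = Csub (csum f n) (csum g n).
Proof. induction n; simpl. reflexivity. rewrite IHn. ring. Qed.
Lemma csum_mulr f c n : Cmul (csum f n) c = csum (fun k => Cmul (f k) c) n.
Proof. induction n; simpl. reflexivity. rewrite <- IHn. ring. Qed.

Lemma csum_norm f n : Cmod (csum f n) <= sum_f_R0 (fun k => Cmod (f k)) n.
Proof. induction n; simpl. lra. eapply Rle_trans. apply CmodD. lra. Qed.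

Definition conv (a : nat -> CC) (n : nat) : CC := csum (fun k => Cmul (a k) (a (n - k)%nat)) n.
Definition Tsum a z N := csum (fun k => Cmul (Cmul (a k) (Cpow z k)) (Cpsum a z (N - k))) N.

Lemma csum_S f n : csum f (S n) = Cadd (csum f n) (f (S n)).
Proof. reflexivity. Qed.
Lemma Cpsum_S a z n : Cpsum a z (S n) = Cadd (Cpsum a z n) (Cmul (a (S n)) (Cpow z (S n))).
Proof. reflexivity. Qed.

Lemma Tsum_eq a z N : Tsum a z N = csum (fun n => Cmul (conv a n) (Cpow z n)) N.
Proof.
  unfold Tsum. induction N.
  - simpl. unfold conv; simpl. ring.
  - rewrite csum_S. rewrite Nat.sub_diag.
    rewrite (csum_ext _ (fun k => Cadd (Cmul (Cmul (a k) (Cpow z k)) (Cpsum a z (N - k)))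
       (Cmul (Cmul (a k) (a (S N - k)%nat)) (Cpow z (S N))))).
    2:{ intros k Hk. replace (S N - k)%nat with (S (N - k)) by lia. rewrite Cpsum_S.
        replace (Cpow z (S N)) with (Cmul (Cpow z k) (Cpow z (S (N-k)))).
        ring. rewrite <- Cpow_add. f_equal. lia. }
    rewrite csum_add, IHN. rewrite (csum_S _ N). unfold conv at 3. rewrite csum_S.
    rewrite Nat.sub_diag. rewrite <- csum_mulr. simpl Cpsum. 
    ring.
Qed.

Definition Rem a z N := csum (fun k => Cmul (Cmul (a k) (Cpow z k)) (Csub (Cpsum a z N) (Cpsum a z (N - k)))) N.

Lemma sq_decomp a z N :
  Cmul (Cpsum a z N) (Cpsum a z N) = Cadd (csum (fun n => Cmul (conv a n) (Cpow z n)) N) (Rem a z N).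
Proof.
  rewrite <- Tsum_eq. unfold Tsum, Rem. rewrite <- csum_add.
  rewrite (Cpsum_csum a z N) at 1. rewrite csum_mulr.
  apply csum_ext. intros. ring.
Qed.

Section Bounds.
Variables (a : nat -> CC) (z : CC) (N : nat) (B th : R).
Hypothesis HB0 : 0 <= B.
Hypothesis Hth : 0 <= th < 1.
Hypothesis Hb : forall k, (k <= N)%nat -> Cmod (Cmul (a k) (Cpow z k)) <= B * th ^ k.

Lemma diff_bound m d : (m + d <= N)%nat ->
  Cmod (Csub (Cpsum a z (m + d)) (Cpsum a z m)) <= B * (th ^ S m - th ^ S (m + d)) / (1 - th).
Proof.
  induction d; intro H.
  - rewrite Nat.add_0_r. replace (Csub (Cpsum a z m) (Cpsum a z m)) with Defs.C0 by
      ring. change Defs.C0 with (RtoC 0). rewrite CmodR, Rabs_R0. unfold Rdiv. rewrite Rminus_diag. lra.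
  - replace (m + S d)%nat with (S (m + d)) by lia. rewrite Cpsum_S.
    replace (Csub (Cadd (Cpsum a z (m + d)) (Cmul (a (S (m + d))) (Cpow z (S (m + d))))) (Cpsum a z m))
      with (Cadd (Csub (Cpsum a z (m + d)) (Cpsum a z m)) (Cmul (a (S (m + d))) (Cpow z (S (m + d))))) by ring.
    eapply Rle_trans. apply CmodD.
    pose proof (IHd ltac:(lia)). pose proof (Hb (S (m+d)) ltac:(lia)).
    apply Rle_trans with (B * (th ^ S m - th ^ S (m + d)) / (1 - th) + B * th ^ S (m + d)). lra.
    apply Req_le. field_simplify; try lra. simpl. field. lra.
Qed.

Lemma aux1 x : 0 <= x -> B * (th ^ 1 - x) / (1 - th) + B * 1 <= B / (1 - th).
Proof.
  intro Hx. replace (B * (th ^ 1 - x) / (1 - th) + B * 1) with (B / (1 - th) - B * x / (1 - th))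
   by (field; lra).
  assert (0 <= B * x / (1 - th)). apply Rmult_le_pos. nra. left; apply Rinv_0_lt_compat; lra. lra.
Qed.

Lemma psum_bound n : (n <= N)%nat -> Cmod (Cpsum a z n) <= B / (1 - th).
Proof.
  intro H. pose proof (Hb 0 ltac:(lia)) as H0. simpl in H0.
  pose proof (aux1 0 (Rle_refl 0)) as H2.
  destruct n.
  - simpl. rewrite Rminus_0_r in H2. assert (B * th / (1-th) >= 0).
    apply Rle_ge, Rmult_le_pos. nra. left; apply Rinv_0_lt_compat; lra. simpl in H2. lra.
  - assert (Hd := diff_bound 0 (S n) ltac:(lia)). simpl plus in Hd.
    replace (Cpsum a z (S n)) with (Cadd (Csub (Cpsum a z (S n)) (Cpsum a z 0)) (Cpsum a z 0)) by ring.
    eapply Rle_trans. apply CmodD. change (Cpsum a z 0) with (Cmul (a 0) Defs.C1) in *.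
    assert (0 <= th ^ S (S n)) by (apply pow_le; lra).
    pose proof (aux1 _ H1). lra.
Qed.

Lemma Rem_bound : Cmod (Rem a z N) <= INR (S N) * (B * B * th ^ S N / (1 - th)).
Proof.
  unfold Rem. eapply Rle_trans. apply csum_norm.
  rewrite Rmult_comm, <- sum_cte.
  apply sum_Rle. intros k Hk. rewrite CmodM.
  assert (Hd := diff_bound (N - k) k ltac:(lia)). replace (N - k + k)%nat with N in Hd by lia.
  pose proof (Hb k Hk).
  assert (0 <= th ^ S N) by (apply pow_le; lra).
  apply Rle_trans with (B * th ^ k * (B * (th ^ S (N - k)) / (1 - th))).
  apply Rmult_le_compat; try apply Cmod_ge0; auto.
  eapply Rle_trans. apply Hd. unfold Rdiv. apply Rmult_le_compat_r.
  left; apply Rinv_0_lt_compat; lra. nra.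
  replace (th ^ S N) with (th ^ k * th ^ S (N - k)). apply Req_le. field. lra.
  rewrite <- pow_add. f_equal. lia.
Qed.
End Bounds.

Lemma Cmod_sq z : Cmod z ^ 2 = Cre z ^ 2 + Cim z ^ 2.
Proof. unfold Cmod. apply pow2_sqrt. nra. Qed.

Lemma polar w : RtoC (Cmod w * cos (Carg w)) = RtoC (Cre w) /\ Cmod w * sin (Carg w) = Cim w.
Proof.
  pose proof (Cmod_sq w) as Hs. pose proof (Cmod_ge0 w) as Hp.
  destruct (Req_dec (Cmod w) 0) as [H0|H0].
  - rewrite H0 in *. assert (Cre w = 0 /\ Cim w = 0) by nra. destruct H. rewrite H, H1. split; [f_equal|]; ring.
  - assert (Hy : -1 <= Cre w / Cmod w <= 1).
    { assert (Cre w ^ 2 <= Cmod w ^ 2) by nra.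
      split. apply Rmult_le_reg_r with (Cmod w). lra. unfold Rdiv. rewrite Rmult_assoc, Rinv_l by lra. nra.
      apply Rmult_le_reg_r with (Cmod w). lra. unfold Rdiv. rewrite Rmult_assoc, Rinv_l by lra. nra. }
    assert (Hsq : sqrt (1 - (Cre w / Cmod w)²) = Rabs (Cim w) / Cmod w).
    { replace (1 - (Cre w / Cmod w)²) with ((Rabs (Cim w) / Cmod w) ^ 2).
      apply sqrt_pow2. apply Rmult_le_pos. apply Rabs_pos. left; apply Rinv_0_lt_compat; lra.
      unfold Rsqr. rewrite <- Rsqr_pow2. unfold Rdiv. rewrite Rsqr_mult. rewrite <- Rsqr_abs.
      unfold Rsqr. field_simplify. 2: lra. rewrite Hs. field. all: try (rewrite <- Hs; apply pow_nonzero); auto. }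
    unfold Carg. destruct (Rle_dec 0 (Cim w)).
    + rewrite cos_acos, sin_acos, Hsq by auto. rewrite Rabs_pos_eq by lra. split. f_equal. field. lra. field. lra.
    + rewrite cos_neg, sin_neg, cos_acos, sin_acos, Hsq by auto. rewrite Rabs_left by lra. split. f_equal. field. lra. field. lra.
Qed.

Lemma Csqrt_sq w : Cmul (Csqrt w) (Csqrt w) = w.
Proof.
  destruct (polar w) as [H1 H2]. injection H1 as H1.
  unfold Csqrt, Cexpi, Cmul, RtoC, Cre, Cim; simpl.
  destruct w as [u v]. unfold Cre, Cim in *; simpl in *.
  set (th := Carg (u, v)) in *.
  replace th with (2 * (th / 2)) in H1, H2 by field.
  rewrite cos_2a in H1. rewrite sin_2a in H2.
  pose proof (Cmod_ge0 (u,v)).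
  assert (sqrt (Cmod (u, v)) * sqrt (Cmod (u, v)) = Cmod (u,v)) by (apply sqrt_sqrt; auto).
  f_equal; nra.
Qed.

Lemma Cmod_Csqrt w : Cmod (Csqrt w) = sqrt (Cmod w).
Proof.
  pose proof (f_equal Cmod (Csqrt_sq w)). rewrite CmodM in H.
  rewrite <- H. replace (Cmod (Csqrt w) * Cmod (Csqrt w)) with (Cmod (Csqrt w) ^ 2) by ring.
  rewrite sqrt_pow2. reflexivity. apply Cmod_ge0.
Qed.

Lemma lim_bound u L P c N : Ccv u L -> (forall m, (m >= N)%nat -> Cmod (Csub (u m) P) <= c) ->
  Cmod (Csub L P) <= c.
Proof.
  intros Hc Hb. apply Rle_plus_epsilon. intros eps He.
  destruct (Hc eps He) as [N0 HN0]. specialize (HN0 (max N N0) ltac:(lia)).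
  specialize (Hb (max N N0) ltac:(lia)).
  eapply Rle_trans. apply (CmodBtri _ _ (u (max N N0))). rewrite CmodBsym in HN0. lra.
Qed.

Lemma sum_term_le (f : nat -> R) n k : (forall i, 0 <= f i) -> (k <= n)%nat -> f k <= sum_f_R0 f n.
Proof.
  intros Hf Hk. induction n.
  - replace k with 0%nat by lia. simpl. lra.
  - destruct (Nat.eq_dec k (S n)). subst. simpl. pose proof (cond_pos_sum f n). 
    assert (0 <= sum_f_R0 f n). { clear -Hf. induction n; simpl. apply Hf. pose proof (Hf (S n)). lra. } lra.
    simpl. pose proof (Hf (S n)). pose proof (IHn ltac:(lia)). lra.
Qed.

Lemma cv_terms_bounded a z L : Ccv (Cpsum a z) L ->
  exists B, 0 <= B /\ forall n, Cmod (Cmul (a n) (Cpow z n)) <= B.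
Proof.
  intro Hc. destruct (Hc 1 ltac:(lra)) as [N0 HN0].
  exists (2 + sum_f_R0 (fun k => Cmod (Cmul (a k) (Cpow z k))) N0).
  assert (Hs : 0 <= sum_f_R0 (fun k => Cmod (Cmul (a k) (Cpow z k))) N0).
  { clear. induction N0; cbn [sum_f_R0]. apply Cmod_ge0. pose proof (Cmod_ge0 (Cmul (a (S N0)) (Cpow z (S N0)))). lra. }
  split. lra. intro n. destruct (Compare_dec.le_lt_dec n N0).
  - pose proof (sum_term_le (fun k => Cmod (Cmul (a k) (Cpow z k))) N0 n (fun i => Cmod_ge0 _) l). simpl in H. lra.
  - destruct n. lia. pose proof (HN0 (S n) ltac:(lia)). pose proof (HN0 n ltac:(lia)).
    rewrite Cpsum_S in H.
    replace (Cmul (a (S n)) (Cpow z (S n))) with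
      (Csub (Csub (Cadd (Cpsum a z n) (Cmul (a (S n)) (Cpow z (S n)))) L) (Csub (Cpsum a z n) L)) by ring.
    pose proof (CmodB (Csub (Cadd (Cpsum a z n) (Cmul (a (S n)) (Cpow z (S n)))) L) (Csub (Cpsum a z n) L)). lra.
Qed.

Lemma csum_zero (g : nat -> CC) m : (forall k, (k <= m)%nat -> g k = Defs.C0) -> csum g m = Defs.C0.
Proof. induction m; intro H. simpl; apply H; lia. rewrite csum_S, IHm. rewrite (H (S m)) by lia. ring. intros; apply H; lia. Qed.

Lemma csum_prefix0 (g : nat -> CC) n : (forall k, (k < n)%nat -> g k = Defs.C0) ->
  forall m, csum g (n + m) = csum (fun j => g (n + j)%nat) m.
Proof.
  intros H0. assert (Hn : csum g n = g n).
  { destruct n. reflexivity. rewrite csum_S.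
    assert (csum g n = Defs.C0). { apply csum_zero. intros; apply H0; lia. }
    rewrite H. ring. }
  induction m. rewrite Nat.add_0_r. simpl. rewrite Nat.add_0_r. auto.
  rewrite Nat.add_succ_r, csum_S, IHm, csum_S. rewrite Nat.add_succ_r. reflexivity.
Qed.

Lemma Cmod_term e x k : 0 <= x -> Cmod (Cmul e (Cpow (RtoC x) k)) = Cmod e * x ^ k.
Proof. intro. rewrite CmodM, Cmod_pow, CmodR, Rabs_pos_eq; auto. Qed.

Lemma coeff_zero (e : nat -> CC) (s : R) : 0 < s ->
  (forall N, (2 <= N)%nat -> exists K, forall x, 0 < x <= s / 2 ->
     Cmod (csum (fun n => Cmul (e n) (Cpow (RtoC x) n)) N) <= K * x ^ S N) ->
  forall n, e n = Defs.C0.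
Proof.
  intros Hs HK n. induction n as [n IH] using Wf_nat.lt_wf_ind.
  destruct (HK (n + 2)%nat ltac:(lia)) as [K HKx].
  set (K' := Rabs K + Cmod (e (S n)) + Cmod (e (S (S n)))).
  assert (Hb : forall x, 0 < x <= Rmin (s/2) 1 -> Cmod (e n) <= x * K').
  { intros x Hx. assert (Hx1 : x <= 1) by (pose proof (Rmin_r (s/2) 1); lra).
    assert (Hx2 : x <= s/2) by (pose proof (Rmin_l (s/2) 1); lra).
    specialize (HKx x ltac:(lra)).
    rewrite (csum_prefix0 (fun n0 => Cmul (e n0) (Cpow (RtoC x) n0)) n) in HKx.
    2:{ intros k Hk. rewrite (IH k Hk). ring. }
    rewrite !csum_S in HKx. simpl csum in HKx. rewrite !Nat.add_0_r in HKx.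
    set (u := Cmul (e n) (Cpow (RtoC x) n)) in HKx.
    set (v := Cmul (e (n + 1)%nat) (Cpow (RtoC x) (n + 1))) in HKx.
    set (w := Cmul (e (n + 2)%nat) (Cpow (RtoC x) (n + 2))) in HKx.
    assert (Cmod u <= Cmod (Cadd (Cadd u v) w) + Cmod v + Cmod w).
    { replace u with (Csub (Csub (Cadd (Cadd u v) w) v) w) at 1 by ring.
      pose proof (CmodB (Csub (Cadd (Cadd u v) w) v) w). pose proof (CmodB (Cadd (Cadd u v) w) v). lra. }
    replace (S (n + 2)) with (3 + n)%nat in HKx by lia.
    assert (H1 : Cmod u <= K * x ^ (3 + n) + Cmod v + Cmod w) by lra. clear H HKx.
    unfold u, v, w in H1. rewrite !Cmod_term in H1 by lra.
    replace (n+1)%nat with (1 + n)%nat in H1 by lia. replace (n+2)%nat with (2 + n)%nat in H1 by lia.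
    rewrite !pow_add in H1.
    assert (0 < x ^ n) by (apply pow_lt; lra).
    apply Rmult_le_reg_r with (x ^ n). auto.
    assert (K * x ^ 3 <= Rabs K * x).
    { assert (K <= Rabs K) by apply Rle_abs. assert (0 <= x * x <= 1) by nra.
      assert (0 <= Rabs K) by apply Rabs_pos. simpl.
      replace (K * (x * (x * (x * 1)))) with (K * (x*x) * x) by ring.
      apply Rmult_le_compat_r. nra. nra. }
    assert (x ^ 2 <= x) by (simpl; nra). simpl pow in *.
    pose proof (Cmod_ge0 (e (S (S n)))). pose proof (Cmod_ge0 (e (S n))).
    change (1+n)%nat with (S n) in H1. change (2+n)%nat with (S (S n)) in H1.
    assert (K * (x * (x * (x * 1))) * x^n <= Rabs K * x * x^n) by (apply Rmult_le_compat_r; lra).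
    assert (Cmod (e (S (S n))) * (x * (x * 1)) * x^n <= Cmod (e (S (S n))) * x * x^n).
    { apply Rmult_le_compat_r. lra. apply Rmult_le_compat_l; lra. }
    unfold K'. nra. }
  apply Cmod_eq0. pose proof (Cmod_ge0 (e n)).
  destruct (Req_dec (Cmod (e n)) 0). auto. exfalso.
  assert (HK'0 : 0 <= K') by (unfold K'; pose proof (Rabs_pos K); pose proof (Cmod_ge0 (e (S n))); pose proof (Cmod_ge0 (e (S (S n)))); lra).
  set (x := Rmin (Rmin (s/2) 1) (Cmod (e n) / (2 * (K' + 1)))).
  assert (0 < x). { unfold x. apply Rmin_glb_lt. apply Rmin_glb_lt; lra. apply Rdiv_lt_0_compat; lra. }
  assert (x <= Cmod (e n) / (2 * (K' + 1))) by apply Rmin_r.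
  specialize (Hb x ltac:(split; [auto | apply Rmin_l])).
  assert (x * (2 * (K' + 1)) <= Cmod (e n)).
  { apply Rmult_le_reg_r with (/ (2 * (K' + 1))). apply Rinv_0_lt_compat; lra.
    rewrite Rmult_assoc, Rinv_r by lra. lra. }
  nra.
Qed.

Definition qq (t z : CC) : CC := Cadd (Csub (Cpow z 2) z) t.
Definition cq (t : CC) (n : nat) : CC :=
  match n with 0 => t | 1 => Copp Defs.C1 | 2 => Defs.C1 | _ => Defs.C0 end.

Lemma csum_cq t z N : (2 <= N)%nat -> csum (fun n => Cmul (cq t n) (Cpow z n)) N = qq t z.
Proof.
  intro H. induction H.
  - unfold qq. simpl. ring.
  - rewrite csum_S, IHle. simpl cq. destruct m as [|[|m]]; try lia. ring.
Qed.

Lemma f_t_sq t z : Cmul (f_t t z) (f_t t z) = qq t z.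
Proof. unfold f_t. rewrite Csqrt_sq. reflexivity. Qed.

Lemma pow_le1' th n : 0 <= th <= 1 -> th ^ n <= 1.
Proof. intro H. induction n; simpl. lra. assert (0 <= th ^ n) by (apply pow_le; lra). nra. Qed.

Lemma lim_diff a z L N B th : 0 <= B -> 0 <= th < 1 ->
  (forall k, Cmod (Cmul (a k) (Cpow z k)) <= B * th ^ k) ->
  Ccv (Cpsum a z) L -> Cmod (Csub L (Cpsum a z N)) <= B * th ^ S N / (1 - th).
Proof.
  intros HB Hth Hb Hc. apply (lim_bound _ _ _ _ N Hc). intros m Hm.
  replace m with (N + (m - N))%nat by lia.
  eapply Rle_trans. apply (diff_bound a z (N + (m - N)) B th Hth (fun k _ => Hb k)). lia.
  assert (0 <= th ^ S (N + (m - N))) by (apply pow_le; lra).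
  unfold Rdiv. apply Rmult_le_compat_r. left; apply Rinv_0_lt_compat; lra. nra.
Qed.

Lemma conv_id t a : is_taylor_at0 (f_t t) a -> forall n, conv a n = cq t n.
Proof.
  intros [rho [Hrho Hcv]].
  set (s := rho / 2).
  assert (Hs : 0 < s) by (unfold s; lra).
  assert (Hz0 : Cmod (RtoC s) < rho) by (rewrite CmodR, Rabs_pos_eq; unfold s; lra).
  destruct (cv_terms_bounded _ _ _ (Hcv _ Hz0)) as [B [HB HBn]].
  assert (HBa : forall n, Cmod (a n) * s ^ n <= B).
  { intro n. rewrite <- Cmod_term by lra. apply HBn. }
  intros n. 
  assert (He : forall n, Csub (conv a n) (cq t n) = Defs.C0).
  2:{ specialize (He n). replace (conv a n) with (Cadd (Csub (conv a n) (cq t n)) (cq t n)) by ring.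
      rewrite He. ring. }
  apply (coeff_zero _ s Hs). intros N HN.
  exists ((12 * B * B + INR (S N) * (B * B * 2)) / s ^ S N).
  intros x Hx. set (z := RtoC x). set (th := x / s).
  assert (Hth : 0 < th <= 1/2) by (unfold th; split; [apply Rdiv_lt_0_compat; lra | apply Rmult_le_reg_r with s; [lra|]; unfold Rdiv; rewrite Rmult_assoc, Rinv_l; lra]).
  assert (Hb : forall k, Cmod (Cmul (a k) (Cpow z k)) <= B * th ^ k).
  { intro k. unfold z. rewrite Cmod_term by lra. specialize (HBa k).
    replace x with (s * th) by (unfold th; field; lra). rewrite Rpow_mult_distr.
    assert (0 <= th ^ k) by (apply pow_le; lra). rewrite <- Rmult_assoc. apply Rmult_le_compat_r; auto. }
  assert (Hzr : Cmod z < rho) by (unfold z; rewrite CmodR, Rabs_pos_eq; unfold s in Hx; lra).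
  pose proof (Hcv z Hzr) as Hc.
  set (P := Cpsum a z N). set (F := f_t t z).
  assert (HX : 0 <= th ^ S N <= 1). { split. apply pow_le; lra. apply pow_le1'; lra. }
  assert (HY : 1 / (1 - th) <= 2). { apply Rmult_le_reg_r with (1 - th). lra. field_simplify; lra. }
  assert (HFP : Cmod (Csub F P) <= 2 * B * th ^ S N).
  { eapply Rle_trans. apply (lim_diff a z F N B th HB ltac:(lra) Hb Hc).
    replace (B * th ^ S N / (1 - th)) with (B * th ^ S N * (1 / (1 - th))) by (field; lra).
    assert (0 <= B * th^S N) by (apply Rmult_le_pos; lra). apply Rle_trans with (B * th ^ S N * 2). apply Rmult_le_compat_l; lra. lra. }
  assert (HP : Cmod P <= 2 * B).
  { eapply Rle_trans. apply (psum_bound a z N B th HB ltac:(lra) (fun k _ => Hb k) N). lia.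
    replace (B / (1 - th)) with (B * (1 / (1 - th))) by (field; lra).
    apply Rle_trans with (B * 2). apply Rmult_le_compat_l; lra. lra. }
  assert (HR := Rem_bound a z N B th HB ltac:(lra) (fun k _ => Hb k)).
  assert (HR' : Cmod (Rem a z N) <= INR (S N) * (B * B * 2) * th ^ S N).
  { eapply Rle_trans. apply HR. pose proof (pos_INR (S N)).
    replace (B * B * th ^ S N / (1 - th)) with (B * B * th ^ S N * (1 / (1 - th))) by (field; lra).
    assert (0 <= B * B * th ^ S N) by (apply Rmult_le_pos; nra).
    assert (B * B * th ^ S N * (1 / (1 - th)) <= B * B * th ^ S N * 2) by (apply Rmult_le_compat_l; lra).
    nra. }
  idtac.
  assert (Hsq := sq_decomp a z N). fold P in Hsq.
  replace (csum (fun n0 : nat => Cmul (Csub (conv a n0) (cq t n0)) (Cpow z n0)) N) with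
    (Csub (csum (fun n0 : nat => Cmul (conv a n0) (Cpow z n0)) N) (csum (fun n0 => Cmul (cq t n0) (Cpow z n0)) N)).
  2:{ rewrite <- csum_sub. apply csum_ext. intros. unfold z. ring. }
  rewrite csum_cq by auto. rewrite <- (f_t_sq t z). fold F.
  replace (csum (fun n0 : nat => Cmul (conv a n0) (Cpow z n0)) N) with (Csub (Cmul P P) (Rem a z N))
    by (rewrite Hsq; ring).
  replace (Csub (Csub (Cmul P P) (Rem a z N)) (Cmul F F)) with
    (Csub (Cmul (Csub P F) (Cadd (Cadd P P) (Csub F P))) (Rem a z N)) by ring.
  eapply Rle_trans. apply CmodB. rewrite CmodM.
  assert (Cmod (Cadd (Cadd P P) (Csub F P)) <= 6 * B).
  { eapply Rle_trans. apply CmodD. pose proof (CmodD P P). nra. }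
  rewrite CmodBsym.
  assert (Cmod (Csub F P) * Cmod (Cadd (Cadd P P) (Csub F P)) <= 2 * B * th ^ S N * (6 * B)).
  { apply Rmult_le_compat; auto using Cmod_ge0. }
  assert (Hxs : x ^ S N = s ^ S N * th ^ S N).
  { rewrite <- Rpow_mult_distr. f_equal. unfold th. field. lra. }
  assert (0 < s ^ S N) by (apply pow_lt; lra).
  rewrite Hxs. replace ((12 * B * B + INR (S N) * (B * B * 2)) / s ^ S N * (s ^ S N * th ^ S N))
    with (12 * B * B * th ^ S N + INR (S N) * (B * B * 2) * th ^ S N) by (field; lra).
  nra.
Qed.

Lemma bernoulli eta n : 0 <= eta -> 1 + INR n * eta <= (1 + eta) ^ n.
Proof.
  intro H. induction n. simpl. lra. rewrite S_INR. simpl.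
  assert (0 <= INR n) by apply pos_INR. nra.
Qed.

Lemma n_pow_small rho d : 0 <= rho < 1 -> 0 < d ->
  exists N0, forall n, (n >= N0)%nat -> INR n * rho ^ n < d.
Proof.
  intros Hr Hd. destruct (Req_dec rho 0) as [H0|H0].
  - exists 1%nat. intros n Hn. destruct n. lia. rewrite H0. simpl. lra.
  - set (y := sqrt rho). assert (Hy : 0 < y < 1).
    { unfold y. split. apply sqrt_lt_R0. lra. rewrite <- sqrt_1. apply sqrt_lt_1; lra. }
    assert (Hyy : y * y = rho) by (apply sqrt_sqrt; lra).
    set (eta := / y - 1). assert (He : 0 < eta).
    { unfold eta. assert (1 < / y). { rewrite <- Rinv_1. apply Rinv_lt_contravar; lra. } lra. }
    destruct (pow_lt_1_zero y ltac:(rewrite Rabs_pos_eq; lra) (d * eta) ltac:(nra)) as [N0 HN0].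
    exists N0. intros n Hn. specialize (HN0 n Hn). rewrite Rabs_pos_eq in HN0 by (apply pow_le; lra).
    pose proof (bernoulli eta n ltac:(lra)).
    assert (Hprod : (1 + eta) ^ n * y ^ n = 1).
    { rewrite <- Rpow_mult_distr. replace ((1 + eta) * y) with 1. apply pow1. unfold eta. field. lra. }
    assert (0 <= y ^ n) by (apply pow_le; lra).
    assert (INR n * eta * y ^ n <= 1) by nra.
    replace (rho ^ n) with (y ^ n * y ^ n) by (rewrite <- Rpow_mult_distr, Hyy; auto).
    assert (0 <= INR n) by apply pos_INR.
    assert (INR n * y ^ n <= / eta).
    { apply Rmult_le_reg_l with eta. lra. rewrite Rinv_r by lra. nra. }
    apply Rle_lt_trans with (/ eta * y ^ n). nra.
    apply Rmult_lt_reg_l with eta. lra. rewrite <- Rmult_assoc, Rinv_r by lra. lra.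
Qed.

Lemma pow_diff z w rho n : Cmod z <= rho -> Cmod w <= rho ->
  Cmod (Csub (Cpow z n) (Cpow w n)) <= INR n * rho ^ (pred n) * Cmod (Csub z w).
Proof.
  intros Hz Hw. assert (Hr : 0 <= rho) by (pose proof (Cmod_ge0 z); lra).
  induction n.
  - simpl. replace (Csub Defs.C1 Defs.C1) with Defs.C0 by ring. change Defs.C0 with (RtoC 0).
    rewrite CmodR, Rabs_R0. lra.
  - replace (Csub (Cpow z (S n)) (Cpow w (S n))) with
      (Cadd (Cmul z (Csub (Cpow z n) (Cpow w n))) (Cmul (Cpow w n) (Csub z w))) by (simpl; ring).
    eapply Rle_trans. apply CmodD. rewrite !CmodM, Cmod_pow.
    assert (Hwn : Cmod w ^ n <= rho ^ n) by (apply pow_incr; split; auto using Cmod_ge0).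
    pose proof (Cmod_ge0 (Csub z w)). pose proof (Cmod_ge0 (Csub (Cpow z n) (Cpow w n))).
    pose proof (Cmod_ge0 z).
    assert (Cmod z * Cmod (Csub (Cpow z n) (Cpow w n)) <= rho * (INR n * rho ^ pred n * Cmod (Csub z w))).
    { apply Rmult_le_compat; auto. }
    assert (rho * (INR n * rho ^ pred n) = INR n * rho ^ n).
    { destruct n. simpl. ring. simpl pred. simpl. ring. }
    rewrite S_INR. simpl pred.
    assert (Cmod w ^ n * Cmod (Csub z w) <= rho ^ n * Cmod (Csub z w)) by (apply Rmult_le_compat_r; auto).
    nra.
Qed.

Lemma sum_deriv rho N : 0 <= rho < 1 ->
  sum_f_R0 (fun k => INR k * rho ^ (pred k)) N <= 1 / (1 - rho) ^ 2.
Proof.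
  intro Hr.
  assert (Heq : forall N, sum_f_R0 (fun k => INR k * rho ^ (pred k)) N * (1 - rho) ^ 2 =
     1 - INR (S N) * rho ^ N + INR N * rho ^ S N).
  { induction N0. simpl. ring. rewrite tech5. rewrite Rmult_plus_distr_r, IHN0.
    rewrite !S_INR. simpl pred. simpl. ring. }
  apply Rmult_le_reg_r with ((1 - rho) ^ 2). apply pow_lt; lra.
  rewrite Heq. replace (1 / (1 - rho) ^ 2 * (1 - rho) ^ 2) with 1 by (field; lra).
  assert (0 <= rho ^ N) by (apply pow_le; lra). rewrite S_INR. simpl.
  assert (0 <= INR N) by apply pos_INR. assert (0 <= rho ^ N * (INR N + 1 - INR N * rho)) by (apply Rmult_le_pos; nra). nra.
Qed.

Lemma psum_lip a z w N rho M1 : Cmod z <= rho -> Cmod w <= rho -> 0 <= rho < 1 -> 0 <= M1 ->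
  (forall k, (k <= N)%nat -> Cmod (a k) <= M1) ->
  Cmod (Csub (Cpsum a z N) (Cpsum a w N)) <= M1 * Cmod (Csub z w) * (1 / (1 - rho) ^ 2).
Proof.
  intros Hz Hw Hr HM Ha.
  rewrite !Cpsum_csum, <- csum_sub.
  rewrite (csum_ext _ (fun k => Cmul (a k) (Csub (Cpow z k) (Cpow w k)))) by (intros; ring).
  eapply Rle_trans. apply csum_norm.
  apply Rle_trans with (sum_f_R0 (fun k => INR k * rho ^ (pred k) * (M1 * Cmod (Csub z w))) N).
  - apply sum_Rle. intros k Hk. rewrite CmodM. pose proof (pow_diff z w rho k Hz Hw).
    pose proof (Ha k Hk). pose proof (Cmod_ge0 (Csub (Cpow z k) (Cpow w k))).
    assert (0 <= INR k * rho ^ pred k * Cmod (Csub z w)).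
    { apply Rmult_le_pos. apply Rmult_le_pos. apply pos_INR. apply pow_le; lra. apply Cmod_ge0. }
    apply Rle_trans with (M1 * (INR k * rho ^ pred k * Cmod (Csub z w))).
    apply Rmult_le_compat; auto using Cmod_ge0. nra.
  - rewrite <- scal_sum. pose proof (sum_deriv rho N Hr).
    assert (0 <= M1 * Cmod (Csub z w)) by (apply Rmult_le_pos; auto using Cmod_ge0). nra.
Qed.

Lemma sqerr t a N z rho M1 : (2 <= N)%nat -> (forall n, conv a n = cq t n) -> 0 <= M1 ->
  0 <= rho < 1 -> Cmod z <= rho -> (forall k, (k <= N)%nat -> Cmod (a k) <= M1) ->
  Cmod (Csub (Cmul (Cpsum a z N) (Cpsum a z N)) (qq t z)) <= INR (S N) * (M1 * M1 * rho ^ S N / (1 - rho)).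
Proof.
  intros HN Hc HM Hr Hz Ha.
  rewrite sq_decomp. rewrite (csum_ext _ (fun n => Cmul (cq t n) (Cpow z n))) by (intros; rewrite Hc; auto).
  rewrite csum_cq by auto.
  replace (Csub (Cadd (qq t z) (Rem a z N)) (qq t z)) with (Rem a z N) by ring.
  apply Rem_bound; auto. intros k Hk. rewrite CmodM, Cmod_pow.
  apply Rmult_le_compat; auto using Cmod_ge0. apply pow_le, Cmod_ge0.
  apply pow_incr. split; auto using Cmod_ge0.
Qed.

Lemma root_w t s : Cmul s s = Csub (RtoC (1/4)) t -> qq t (Cadd (RtoC (1/2)) s) = Defs.C0.
Proof.
  destruct t as [t1 t2], s as [p q]. unfold qq, Cmul, Csub, Cadd, Copp, RtoC, Cre, Cim, Defs.C0, Defs.C1. simpl.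
  intro H. injection H as H1 H2. f_equal; nra.
Qed.

Lemma root_z t s h : Cmul s s = Csub (RtoC (1/4)) t ->
  qq t (Cadd (Cadd (RtoC (1/2)) s) (RtoC h)) = Cmul (RtoC h) (Cadd (Cadd s s) (RtoC h)).
Proof.
  destruct t as [t1 t2], s as [p q]. unfold qq, Cmul, Csub, Cadd, Copp, RtoC, Cre, Cim, Defs.C0, Defs.C1. simpl.
  intro H. injection H as H1 H2. f_equal; nra.
Qed.

Theorem lemma5p7 (r M : R) (hr0 : 0 < r) (hr1 : r < 1/4) (hM : 0 < M) :
  exists N : nat, forall t : CC, Cmod (Csub t (RtoC (1/4))) = r ->
    forall a : nat -> CC, is_taylor_at0 (f_t t) a ->
      exists n : nat, (1 <= n <= N)%nat /\ Cmod (a n) > M.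
Proof.
  set (sr := sqrt r).
  assert (Hsr2 : sr * sr = r) by (apply sqrt_sqrt; lra).
  assert (Hsr : 0 < sr < 1/2). { assert (0 < sr) by (apply sqrt_lt_R0; lra). split; auto. nra. }
  set (rho0 := 1/2 + sr). set (rho1 := (1 + rho0) / 2).
  assert (Hr1 : rho0 < rho1 < 1) by (unfold rho1, rho0; lra).
  assert (Hr0 : 1/2 < rho0) by (unfold rho0; lra).
  set (M1 := M + 1).
  set (L := M1 * (1 / (1 - rho1) ^ 2)).
  assert (HL : 0 < L). { unfold L. apply Rmult_lt_0_compat. unfold M1; lra.
    apply Rdiv_lt_0_compat. lra. apply pow_lt; lra. }
  set (h := Rmin (Rmin ((1 - rho0) / 2) sr) (sr / (4 * (L * L)))).
  assert (Hh : 0 < h). { unfold h. apply Rmin_glb_lt. apply Rmin_glb_lt; unfold rho0; lra.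
    apply Rdiv_lt_0_compat. lra. nra. }
  assert (Hh1 : h <= (1 - rho0) / 2) by (unfold h; eapply Rle_trans; [apply Rmin_l | apply Rmin_l]).
  assert (Hh2 : h <= sr) by (unfold h; eapply Rle_trans; [apply Rmin_l | apply Rmin_r]).
  assert (Hh3 : h <= sr / (4 * (L * L))) by (unfold h; apply Rmin_r).
  assert (HM1 : 1 <= M1) by (unfold M1; lra).
  set (delta := h * sr / 6 * (1 - rho1) / (M1 * M1)).
  assert (Hd : 0 < delta). { unfold delta. apply Rdiv_lt_0_compat. apply Rmult_lt_0_compat. nra. lra. nra. }
  destruct (n_pow_small rho1 delta ltac:(unfold rho1, rho0; lra) Hd) as [N0 HN0].
  exists (max N0 2). intros t Ht a Ha. set (N := max N0 2).
  apply NNPP. intro Hneg.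
  assert (Hle : forall n, (1 <= n <= N)%nat -> Cmod (a n) <= M).
  { intros n Hn. apply Rnot_lt_le. intro Hlt. apply Hneg. exists n. split; auto. }
  pose proof (conv_id t a Ha) as Hc.
  assert (Ha0 : Cmod (a 0%nat) <= 1).
  { assert (Cmul (a 0%nat) (a 0%nat) = t) by (apply (Hc 0%nat)).
    assert (Cmod t <= r + 1/4).
    { replace t with (Cadd (Csub t (RtoC (1/4))) (RtoC (1/4))) by ring.
      eapply Rle_trans. apply CmodD. rewrite Ht, CmodR, Rabs_pos_eq; lra. }
    rewrite <- H, CmodM in H0. pose proof (Cmod_ge0 (a 0%nat)). nra. }
  assert (HaN : forall k, (k <= N)%nat -> Cmod (a k) <= M1).
  { intros k Hk. destruct k. unfold M1; lra. pose proof (Hle (S k) ltac:(lia)). unfold M1; lra. }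
  assert (HN2 : (2 <= N)%nat) by (unfold N; lia).
  set (eps := INR (S N) * (M1 * M1 * rho1 ^ S N / (1 - rho1))).
  assert (Heps : eps < h * sr / 6).
  { specialize (HN0 (S N) ltac:(unfold N; lia)). unfold eps.
    replace (INR (S N) * (M1 * M1 * rho1 ^ S N / (1 - rho1))) with
      (INR (S N) * rho1 ^ S N * (M1 * M1 / (1 - rho1))) by (field; lra).
    apply Rlt_le_trans with (delta * (M1 * M1 / (1 - rho1))).
    apply Rmult_lt_compat_r. apply Rdiv_lt_0_compat; nra. auto.
    unfold delta. apply Req_le. field. split; nra. }
  set (s := Csqrt (Csub (RtoC (1/4)) t)).
  assert (Hss : Cmul s s = Csub (RtoC (1/4)) t) by apply Csqrt_sq.
  assert (Hsm : Cmod s = sr) by (unfold s; rewrite Cmod_Csqrt, CmodBsym, Ht; auto).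
  set (w := Cadd (RtoC (1/2)) s).
  assert (Hw : Cmod w <= rho1).
  { unfold w. eapply Rle_trans. apply CmodD. rewrite CmodR, Rabs_pos_eq, Hsm by lra. unfold rho1, rho0. lra. }
  set (z := Cadd w (RtoC h)).
  assert (Hz : Cmod z <= rho1).
  { unfold z. eapply Rle_trans. apply CmodD. rewrite CmodR, Rabs_pos_eq by lra.
    assert (Cmod w <= rho0). { unfold w. eapply Rle_trans. apply CmodD. rewrite CmodR, Rabs_pos_eq, Hsm by lra. unfold rho0. lra. }
    unfold rho1. lra. }
  assert (Hqw : qq t w = Defs.C0) by (apply root_w; auto).
  assert (Hqz : qq t z = Cmul (RtoC h) (Cadd (Cadd s s) (RtoC h))) by (apply root_z; auto).
  assert (Hqzm : h * sr <= Cmod (qq t z)).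
  { rewrite Hqz, CmodM, CmodR, Rabs_pos_eq by lra.
    assert (2 * sr - h <= Cmod (Cadd (Cadd s s) (RtoC h))).
    { pose proof (CmodB_ge (Cadd s s) (Copp (RtoC h))).
      replace (Csub (Cadd s s) (Copp (RtoC h))) with (Cadd (Cadd s s) (RtoC h)) in H by ring.
      rewrite CmodN, CmodR, Rabs_pos_eq in H by lra.
      assert (Cmod (Cadd s s) = 2 * sr).
      { replace (Cadd s s) with (Cmul (RtoC 2) s) by (unfold RtoC, Cmul, Cadd, Cre, Cim; destruct s; simpl; f_equal; ring).
        rewrite CmodM, CmodR, Rabs_pos_eq, Hsm by lra. auto. }
      lra. }
    nra. }
  set (Pw := Cpsum a w N). set (Pz := Cpsum a z N).
  assert (0 <= M1) by lra. assert (0 <= rho1 < 1) by lra. pose proof (sqerr t a N w rho1 M1 HN2 Hc H H0 Hw HaN) as Ew. fold Pw eps in Ew.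
  pose proof (sqerr t a N z rho1 M1 HN2 Hc H H0 Hz HaN) as Ez. fold Pz eps in Ez.
  assert (Hlip := psum_lip a z w N rho1 M1 Hz Hw ltac:(lra) ltac:(lra) HaN). fold Pz Pw in Hlip.
  replace (Csub z w) with (RtoC h) in Hlip by (unfold z; ring).
  rewrite CmodR, Rabs_pos_eq in Hlip by lra.
  replace (M1 * h * (1 / (1 - rho1) ^ 2)) with (L * h) in Hlip by (unfold L; ring).
  rewrite Hqw in Ew. replace (Csub (Cmul Pw Pw) Defs.C0) with (Cmul Pw Pw) in Ew by ring.
  rewrite CmodM in Ew.
  assert (HPz : Cmod Pz <= Cmod Pw + L * h).
  { replace Pz with (Cadd (Csub Pz Pw) Pw) by ring. eapply Rle_trans. apply CmodD. lra. }
  assert (Hqz2 : Cmod (qq t z) <= Cmod Pz * Cmod Pz + eps).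
  { replace (qq t z) with (Csub (Cmul Pz Pz) (Csub (Cmul Pz Pz) (qq t z))) by ring.
    eapply Rle_trans. apply CmodB. rewrite CmodM. lra. }
  pose proof (Cmod_ge0 Pw). pose proof (Cmod_ge0 Pz).
  assert (Cmod Pz * Cmod Pz <= 2 * (Cmod Pw * Cmod Pw) + 2 * (L * h) * (L * h)).
  { assert (Cmod Pz * Cmod Pz <= (Cmod Pw + L * h) * (Cmod Pw + L * h)) by (apply Rmult_le_compat; lra).
    nra. }
  assert (2 * (L * h) * (L * h) <= h * sr / 2).
  { assert (h * (4 * (L * L)) <= sr).
    { apply Rmult_le_reg_r with (/ (4 * (L * L))). apply Rinv_0_lt_compat; nra.
      rewrite Rmult_assoc, Rinv_r by nra. rewrite Rmult_1_r. auto. }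
    nra. }
  lra.
Qed.
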